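(* For every $n$, $F_{\wedge,\to}(n)\cong\mathcal U(U(n)_{\wedge,\to})$ as implicative meet-semilattices.
   Context: $F_{\wedge,\to}(n)$ is the free implicative meet-semilattice on $p_1,\dots,p_n$ (the $(\wedge,\to)$-formulas in $p_1,\dots,p_n$ modulo IPC-equivalence). $\mathcal U(X)$ is the Heyting algebra of up-sets of a poset $X$. Models are posets with order-preserving colouring $c:M\to\{0,1\}^n$ and intuitionistic Kripke semantics ($x\models p_i$ iff $c(x)_i=1$). A point $x$ is separated if for some variable $q$, $x\not\models q$ but all $y>x$ satisfy $q$; $M^s$ is the set of separated points with restricted order and colouring. $U(n)$ is the $n$-universal model: the generated submodel of the canonical model of IPC on $p_1,\dots,p_n$ (prime filters of the free Heyting algebra ordered by inclusion, $c(x)_i=1$ iff $p_i\in x$) consisting of points with finite up-set. For every model of finite depth there is a unique p-morphism into $U(n)$; $U(n)_{\wedge,\to}$ is the image of the unique p-morphism $U(n)^s\to U(n)$. *)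

(* Defs.v *)
From mathcomp Require Import all_boot.
From Stdlib Require Import List.
Set Implicit Arguments.
Unset Strict Implicit.
Unset Printing Implicit Defensive.

Inductive form (n : nat) : Type :=
| Var : 'I_n -> form n
| Bot : form n
| And : form n -> form n -> form n
| Or  : form n -> form n -> form n
| Imp : form n -> form n -> form n.
Arguments Var {n}. Arguments Bot {n}. Arguments And {n}. Arguments Or {n}. Arguments Imp {n}.

Definition Top {n} : form n := Imp Bot Bot.

Inductive nd {n : nat} : list (form n) -> form n -> Prop :=
| ndAx   G a     : List.In a G -> nd G a
| ndAndI G a b   : nd G a -> nd G b -> nd G (And a b)
| ndAndE1 G a b  : nd G (And a b) -> nd G a
| ndAndE2 G a b  : nd G (And a b) -> nd G b
| ndOrI1 G a b   : nd G a -> nd G (Or a b)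
| ndOrI2 G a b   : nd G b -> nd G (Or a b)
| ndOrE  G a b c : nd G (Or a b) -> nd (a :: G) c -> nd (b :: G) c -> nd G c
| ndImpI G a b   : nd (a :: G) b -> nd G (Imp a b)
| ndImpE G a b   : nd G (Imp a b) -> nd G a -> nd G b
| ndBotE G a     : nd G Bot -> nd G a.

Definition prov {n} (a : form n) : Prop := nd nil a.

Inductive iform (n : nat) : Type :=
| IVar : 'I_n -> iform n
| ITop : iform n
| IAnd : iform n -> iform n -> iform n
| IImp : iform n -> iform n -> iform n.
Arguments IVar {n}. Arguments ITop {n}. Arguments IAnd {n}. Arguments IImp {n}.

Fixpoint emb {n} (a : iform n) : form n :=
  match a with
  | IVar i => Var i
  | ITop => Top
  | IAnd a b => And (emb a) (emb b)
  | IImp a b => Imp (emb a) (emb b)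
  end.

(* IPC-equivalence of (and,->)-formulas; F_{and,->}(n) = iform n / ipc_equiv. *)
Definition ipc_equiv {n} (a b : iform n) : Prop :=
  prov (Imp (emb a) (emb b)) /\ prov (Imp (emb b) (emb a)).

(* ---------- Canonical model: prime filters of the free Heyting algebra ----------
   A filter of the Lindenbaum algebra form n / IPC-equivalence is represented by
   the set of formulas whose classes lie in it. *)
Definition prime_filter {n} (x : form n -> Prop) : Prop :=
  [/\ x Top,
      (forall a b, x a -> prov (Imp a b) -> x b),
      (forall a b, x a -> x b -> x (And a b)),
      ~ x Bot
    & (forall a b, x (Or a b) -> x a \/ x b)].

Definition incl {n} (x y : form n -> Prop) : Prop := forall a, x a -> y a.
Definition same {n} (x y : form n -> Prop) : Prop := forall a, x a <-> y a.

Definition finite_upset {n} (x : form n -> Prop) : Prop :=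
  exists l : list (form n -> Prop),
    forall y, prime_filter y -> incl x y -> exists z, List.In z l /\ same y z.

Definition upoint (n : nat) : Type :=
  { x : form n -> Prop | prime_filter x /\ finite_upset x }.

Definition ule {n} (x y : upoint n) : Prop := incl (proj1_sig x) (proj1_sig y).
Definition ult {n} (x y : upoint n) : Prop := ule x y /\ ~ ule y x.
Definition ueq {n} (x y : upoint n) : Prop := same (proj1_sig x) (proj1_sig y).
Definition ucol {n} (x : upoint n) (i : 'I_n) : Prop := proj1_sig x (Var i).

Definition separated {n} (x : upoint n) : Prop :=
  exists i : 'I_n, ~ ucol x i /\ forall y : upoint n, ult x y -> ucol y i.

Definition spoint (n : nat) : Type := { x : upoint n | separated x }.

Definition pmorphism {n} (f : spoint n -> upoint n) : Prop :=
  [/\ (forall x y : spoint n, ule (proj1_sig x) (proj1_sig y) -> ule (f x) (f y)),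
      (forall (x : spoint n) (i : 'I_n), ucol (f x) i <-> ucol (proj1_sig x) i)
    & (forall (x : spoint n) (y : upoint n), ule (f x) y ->
         exists x' : spoint n, ule (proj1_sig x) (proj1_sig x') /\ ueq (f x') y)].

(* U(n)_{and,->}: the image of the (unique) p-morphism U(n)^s -> U(n),
   as a subposet of U(n). *)
Definition Uai {n} (y : upoint n) : Prop :=
  exists f : spoint n -> upoint n, pmorphism f /\ exists x : spoint n, ueq (f x) y.

Definition upset_Uai {n} (A : upoint n -> Prop) : Prop :=
  (forall x, A x -> Uai x) /\
  (forall x y, A x -> Uai y -> ule x y -> A y).

Definition up_imp {n} (A B : upoint n -> Prop) (x : upoint n) : Prop :=
  Uai x /\ forall y, Uai y -> ule x y -> A y -> B y.

Definition impl_semilattice_iso {n} (g : iform n -> (upoint n -> Prop)) : Prop :=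
  [/\ (forall a, upset_Uai (g a)),
      (forall a b x, g (IAnd a b) x <-> (g a x /\ g b x)),
      (forall a b x, g (IImp a b) x <-> up_imp (g a) (g b) x),
      (forall a b, (forall x, g a x <-> g b x) <-> ipc_equiv a b)
    & (forall A, upset_Uai A -> exists a, forall x, g a x <-> A x)].

(* Main.v *)
Require Import Defs.
From mathcomp Require Import all_boot.
From Stdlib Require Import List Classical ClassicalEpsilon.
Set Implicit Arguments.
Unset Strict Implicit.


Section Syn.
Variable n : nat.
Implicit Types a b c d : form n.
Implicit Types G L : list (form n).

Lemma nd_weak G a : nd G a -> forall G', List.incl G G' -> nd G' a.
Proof.
  induction 1; intros G' HG.
  - apply ndAx; auto.
  - apply ndAndI; auto.
  - eapply ndAndE1; eauto.
  - eapply ndAndE2; eauto.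
  - apply ndOrI1; auto.
  - apply ndOrI2; auto.
  - eapply ndOrE; [apply IHnd1; auto| apply IHnd2 | apply IHnd3];
    intros x [->|Hx]; [left|right;auto|left|right;auto]; auto.
  - apply ndImpI; apply IHnd; intros x [->|Hx]; [left|right]; auto.
  - eapply ndImpE; eauto.
  - apply ndBotE; auto.
Qed.

Lemma ext_ctx G G' a : (forall g, In g G -> nd G' g) -> forall g, In g (a::G) -> nd (a::G') g.
Proof.
  intros HG g [Hg|Hg]. - subst; apply ndAx; left; auto.
  - eapply nd_weak; [apply HG; auto| intros y Hy; right; auto].
Qed.

Lemma nd_cut G a : nd G a -> forall G', (forall g, In g G -> nd G' g) -> nd G' a.
Proof.
  induction 1; intros G' HG.
  - auto.
  - apply ndAndI; auto.
  - eapply ndAndE1; eauto.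
  - eapply ndAndE2; eauto.
  - apply ndOrI1; auto.
  - apply ndOrI2; auto.
  - eapply ndOrE; [apply IHnd1; auto| apply IHnd2 | apply IHnd3]; apply ext_ctx; auto.
  - apply ndImpI; apply IHnd; apply ext_ctx; auto.
  - eapply ndImpE; eauto.
  - apply ndBotE; auto.
Qed.

Lemma prov_weak a G : prov a -> nd G a.
Proof. intro H; eapply nd_weak; [exact H| intros x []]. Qed.

Definition bigAnd L : form n := fold_right And Top L.

Lemma prov_top : prov (@Top n).
Proof. apply ndImpI; apply ndAx; left; auto. Qed.

Lemma bigAnd_elim L g : In g L -> nd (bigAnd L :: nil) g.
Proof.
  induction L as [|x L IH]; [intros []|].
  intros [->|Hg]; simpl.
  - eapply ndAndE1; apply ndAx; left; auto.
  - eapply nd_cut; [apply IH; auto|]. intros y [<-|[]].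
    eapply ndAndE2; apply ndAx; left; auto.
Qed.

Section PF.
Variable x : form n -> Prop.
Hypothesis Hx : prime_filter x.
Lemma pf_top : x Top. Proof. by case: Hx. Qed.
Lemma pf_cl a b : x a -> prov (Imp a b) -> x b. Proof. by case: Hx => _ H _ _ _; apply H. Qed.
Lemma pf_and a b : x a -> x b -> x (And a b). Proof. by case: Hx => _ _ H _ _; apply H. Qed.
Lemma pf_bot : ~ x Bot. Proof. by case: Hx. Qed.
Lemma pf_or a b : x (Or a b) -> x a \/ x b. Proof. by case: Hx => _ _ _ _ H; apply H. Qed.

Lemma pf_bigAnd L : (forall g, In g L -> x g) -> x (bigAnd L).
Proof.
  induction L as [|y L IH]; intro H; simpl; [apply pf_top|].
  apply pf_and; [apply H; left; auto| apply IH; intros; apply H; right; auto].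
Qed.

Lemma pf_derive L c : (forall g, In g L -> x g) -> nd L c -> x c.
Proof.
  intros HL Hd. apply (pf_cl (pf_bigAnd HL)). apply ndImpI.
  eapply nd_cut; [exact Hd|]. intros g Hg; apply bigAnd_elim; auto.
Qed.

Lemma pf_mp a b : x (Imp a b) -> x a -> x b.
Proof.
  intros H1 H2; apply (@pf_derive (Imp a b :: a :: nil)).
  - intros g [<-|[<-|[]]]; auto.
  - eapply ndImpE; apply ndAx; [left|right;left]; auto.
Qed.

Lemma pf_andE a b : x (And a b) -> x a /\ x b.
Proof.
  intro H; split; apply (@pf_derive (And a b :: nil)); try (intros g [<-|[]]; auto).
  - eapply ndAndE1; apply ndAx; left; auto.
  - eapply ndAndE2; apply ndAx; left; auto.
Qed.

Lemma pf_prov a : prov a -> x a.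
Proof. intro H; apply (@pf_derive nil); [intros g []| exact H]. Qed.
End PF.

Record kmodel := KM { kW : Type; kR : kW -> kW -> Prop; kV : kW -> 'I_n -> Prop;
  kRrefl : forall w, kR w w; kRtrans : forall u v w, kR u v -> kR v w -> kR u w;
  kVmon : forall u v i, kR u v -> kV u i -> kV v i }.

Fixpoint forces (M : kmodel) (w : kW M) (a : form n) {struct a} : Prop :=
  match a with
  | Var i => kV w i
  | Bot => False
  | And a b => forces w a /\ forces w b
  | Or a b => forces w a \/ forces w b
  | Imp a b => forall v, kR w v -> forces v a -> forces v b
  end.

Lemma forces_mon M a : forall u v : kW M, kR u v -> forces u a -> forces v a.
Proof.
  induction a; simpl; intros u v Huv H.
  - eapply kVmon; eauto.
  - auto.
  - destruct H; split; eauto.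
  - destruct H; [left|right]; eauto.
  - intros w Hvw; apply H; eapply kRtrans; eauto.
Qed.

Lemma sound M G a : nd G a -> forall w : kW M, (forall g, In g G -> forces w g) -> forces w a.
Proof.
  induction 1; intros w Hw; simpl in *.
  - auto.
  - split; auto.
  - destruct (IHnd w Hw); auto.
  - destruct (IHnd w Hw); auto.
  - left; auto.
  - right; auto.
  - destruct (IHnd1 w Hw) as [H2|H2]; [apply IHnd2|apply IHnd3];
    intros g [<-|Hg]; auto.
  - intros v Hv Ha; apply IHnd; intros g [<-|Hg]; auto.
    eapply forces_mon; eauto.
  - apply (IHnd1 w Hw w (kRrefl w)); auto.
  - destruct (IHnd w Hw).
Qed.

Definition Th (M : kmodel) (w : kW M) : form n -> Prop := fun a => forces w a.

Lemma Th_pf M (w : kW M) : prime_filter (Th w).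
Proof.
  split; unfold Th.
  - simpl; auto.
  - intros a b Ha Hp. apply (sound Hp (w:=w)); [intros g []|apply kRrefl|auto].
  - simpl; auto.
  - simpl; auto.
  - simpl; auto.
Qed.

Lemma Th_mon M (u v : kW M) : kR u v -> Defs.incl (Th u) (Th v).
Proof. intros H a; apply forces_mon; auto. Qed.

End Syn.

Section Lin.
Variable n : nat.
Implicit Types a b c d : form n.
Implicit Types G L : list (form n).

Fixpoint f2t (a : form n) : GenTree.tree 'I_n :=
  match a with
  | Var i => GenTree.Leaf i
  | Bot => GenTree.Node 0 [::]
  | And a b => GenTree.Node 1 [:: f2t a; f2t b]
  | Or a b => GenTree.Node 2 [:: f2t a; f2t b]
  | Imp a b => GenTree.Node 3 [:: f2t a; f2t b]
  end.

Fixpoint t2f (t : GenTree.tree 'I_n) : form n :=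
  match t with
  | GenTree.Leaf i => Var i
  | GenTree.Node 1 [:: t1; t2] => And (t2f t1) (t2f t2)
  | GenTree.Node 2 [:: t1; t2] => Or (t2f t1) (t2f t2)
  | GenTree.Node 3 [:: t1; t2] => Imp (t2f t1) (t2f t2)
  | _ => Bot
  end.

Lemma t2fK a : t2f (f2t a) = a.
Proof. induction a; simpl; try rewrite IHa1 IHa2; auto. Qed.

Definition enumf (k : nat) : form n :=
  match @unpickle (GenTree.tree (ordinal n) : countType) k with Some t => t2f t | None => Bot end.

Lemma enumf_surj a : exists k, enumf k = a.
Proof. exists (pickle (f2t a)). unfold enumf. rewrite pickleK. apply t2fK. Qed.

Definition derives (S : form n -> Prop) c := exists L, (forall g, In g L -> S g) /\ nd L c.

Lemma derives_mono (S S' : form n -> Prop) c : (forall x, S x -> S' x) -> derives S c -> derives S' c.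
Proof. intros H [L [HL Hd]]; exists L; split; auto. Qed.

Lemma split_ext (D : form n -> Prop) c L : (forall g, In g L -> D g \/ g = c) ->
  exists L', (forall g, In g L' -> D g) /\ List.incl L (c :: L').
Proof.
  induction L as [|x L IH]; intro H.
  - exists nil; split; [intros g []| intros g []].
  - destruct IH as [L' [H1 H2]]; [intros; apply H; right; auto|].
    destruct (H x (or_introl erefl)) as [Hx|Hx].
    + exists (x :: L'); split.
      * intros g [<-|Hg]; auto.
      * intros g [<-|Hg]; [right;left;auto|]. destruct (H2 g Hg) as [->|Hg']; [left;auto|right;right;auto].
    + exists L'; split; auto.
      intros g [<-|Hg]; [left; auto| auto].
Qed.

Lemma derives_ext (D : form n -> Prop) c b : derives (fun x => D x \/ x = c) b ->
  exists L, (forall g, In g L -> D g) /\ nd (c :: L) b.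
Proof.
  intros [L [HL Hd]]. destruct (split_ext HL) as [L' [H1 H2]].
  exists L'; split; auto. eapply nd_weak; eauto.
Qed.

Section Chain.
Variable S : form n -> Prop.
Variable b : form n.

Fixpoint chain (k : nat) : form n -> Prop :=
  match k with
  | 0 => S
  | k'.+1 =>
      if excluded_middle_informative (derives (fun x => chain k' x \/ x = enumf k') b)
      then chain k' else (fun x => chain k' x \/ x = enumf k')
  end.

Lemma chain_step k x : chain k x -> chain k.+1 x.
Proof. intro H; simpl; destruct excluded_middle_informative; [auto|left; auto]. Qed.

Lemma chain_mono k k' x : k <= k' -> chain k x -> chain k' x.
Proof.
  intros Hk; induction k' as [|k' IH].
  - destruct k; [auto|discriminate].
  - rewrite leq_eqVlt in Hk. case/orP: Hk => [/eqP ->|Hk]; auto.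
    intro H; apply chain_step; apply IH; auto.
Qed.

Hypothesis Hcons : ~ derives S b.

Lemma chain_cons k : ~ derives (chain k) b.
Proof.
  induction k as [|k IH]; simpl; auto.
  destruct excluded_middle_informative; auto.
Qed.

Definition Lim : form n -> Prop := fun x => exists k, chain k x.

Lemma Lim_fin L : (forall g, In g L -> Lim g) -> exists k, forall g, In g L -> chain k g.
Proof.
  induction L as [|x L IH]; intro H.
  - exists 0; intros g [].
  - destruct IH as [k Hk]; [intros; apply H; right; auto|].
    destruct (H x (or_introl erefl)) as [k' Hk'].
    exists (maxn k k'); intros g [<-|Hg].
    + eapply chain_mono; [apply leq_maxr| auto].
    + eapply chain_mono; [apply leq_maxl| auto].
Qed.

Lemma Lim_cons : ~ derives Lim b.
Proof.
  intros [L [HL Hd]]. destruct (Lim_fin HL) as [k Hk].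
  apply (@chain_cons k); exists L; auto.
Qed.

Lemma Lim_S x : S x -> Lim x.
Proof. intro H; exists 0; auto. Qed.

Lemma Lim_add c : ~ (exists L, (forall g, In g L -> Lim g) /\ nd (c :: L) b) -> Lim c.
Proof.
  intro Hn. destruct (enumf_surj c) as [k Hk].
  exists k.+1. simpl. destruct excluded_middle_informative as [d|d]; [|right; auto].
  exfalso; apply Hn. destruct (derives_ext d) as [L [HL Hd]].
  exists L; split; [intros g Hg; exists k; auto| rewrite -Hk; auto].
Qed.

Lemma Lim_closed c : derives Lim c -> Lim c.
Proof.
  intros [L1 [H1 Hd1]]. apply Lim_add. intros [L2 [H2 Hd2]].
  apply Lim_cons. exists (L1 ++ L2); split.
  - intros g Hg; apply in_app_or in Hg; destruct Hg; auto.
  - eapply nd_cut; [exact Hd2|]. intros g [<-|Hg].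
    + eapply nd_weak; [exact Hd1| intros y Hy; apply in_or_app; left; auto].
    + apply ndAx; apply in_or_app; right; auto.
Qed.

Lemma Lim_pf : prime_filter Lim.
Proof.
  split.
  - apply Lim_closed; exists nil; split; [intros g []| apply prov_top].
  - intros a c Ha Hp. apply Lim_closed. exists (a :: nil); split; [intros g [<-|[]]; auto|].
    eapply ndImpE; [apply prov_weak; exact Hp| apply ndAx; left; auto].
  - intros a c Ha Hc. apply Lim_closed. exists (a :: c :: nil); split; [intros g [<-|[<-|[]]]; auto|].
    apply ndAndI; apply ndAx; [left|right;left]; auto.
  - intro H; apply Lim_cons. exists (Bot :: nil); split; [intros g [<-|[]]; auto|].
    apply ndBotE; apply ndAx; left; auto.
  - intros a c Hac. destruct (classic (Lim a)) as [Ha|Ha]; [left; auto|].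
    destruct (classic (Lim c)) as [Hc|Hc]; [right; auto|exfalso].
    destruct (classic (exists L, (forall g, In g L -> Lim g) /\ nd (a :: L) b)) as [[La [HLa Hda]]|Hn];
      [| apply Ha; apply Lim_add; auto].
    destruct (classic (exists L, (forall g, In g L -> Lim g) /\ nd (c :: L) b)) as [[Lc [HLc Hdc]]|Hn];
      [| apply Hc; apply Lim_add; auto].
    apply Lim_cons. exists (Or a c :: La ++ Lc); split.
    + intros g [<-|Hg]; auto. apply in_app_or in Hg; destruct Hg; auto.
    + eapply ndOrE; [apply ndAx; left; auto| |].
      * eapply nd_weak; [exact Hda|]. intros y [<-|Hy]; [left; auto|right; right; apply in_or_app; left; auto].
      * eapply nd_weak; [exact Hdc|]. intros y [<-|Hy]; [left; auto|right; right; apply in_or_app; right; auto].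
Qed.

Lemma Lim_notb : ~ Lim b.
Proof. intro H; apply Lim_cons; exists (b :: nil); split; [intros g [<-|[]]; auto| apply ndAx; left; auto]. Qed.

End Chain.

Lemma lindenbaum (S : form n -> Prop) b : ~ derives S b ->
  exists Y, prime_filter Y /\ (forall x, S x -> Y x) /\ ~ Y b.
Proof.
  intro H. exists (Lim S b); split; [apply Lim_pf; auto| split; [apply Lim_S| apply Lim_notb; auto]].
Qed.

Lemma pf_ext (x : form n -> Prop) a b : prime_filter x -> ~ x (Imp a b) ->
  exists y, prime_filter y /\ Defs.incl x y /\ y a /\ ~ y b.
Proof.
  intros Hx Hab.
  destruct (@lindenbaum (fun z => x z \/ z = a) b) as [Y [HY [HS Hb]]].
  - intro Hd. destruct (derives_ext Hd) as [L [HL Hd']].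
    apply Hab. eapply pf_derive; eauto. apply ndImpI; auto.
  - exists Y; split; auto; split; [intros z Hz; apply HS; left; auto| split; auto].
Qed.

End Lin.

Lemma reps (A T : Type) (l : list A) (Q : A -> T -> Prop) :
  exists LT : list T, forall a, In a l -> (exists t, Q a t) -> exists t, In t LT /\ Q a t.
Proof.
  induction l as [|x l [LT HLT]].
  - exists nil; intros a [].
  - destruct (classic (exists t, Q x t)) as [[t Ht]|Hn].
    + exists (t :: LT); intros a [<-|Ha] He.
      * exists t; split; [left|]; auto.
      * destruct (HLT a Ha He) as [t' [H1 H2]]; exists t'; split; [right|]; auto.
    + exists LT; intros a [<-|Ha] He; [contradiction|auto].
Qed.

Section Max.
Variable W : Type.
Variable R : W -> W -> Prop.
Hypothesis Rtrans : forall u v w, R u v -> R v w -> R u w.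
Variable P : W -> Prop.

Lemma max_gen k : forall (L : list W) (w0 v : W), length L <= k -> R w0 v -> P v ->
  (forall u, R v u -> P u -> ~ R u v -> exists l, In l L /\ R u l /\ R l u) ->
  exists m, R w0 m /\ P m /\ forall u, R m u -> P u -> R u m.
Proof.
  induction k as [|k IH]; intros L w0 v HL Hv HP HC.
  - exists v; split; auto; split; auto. intros u Hu HPu.
    apply NNPP; intro Hn. destruct (HC u Hu HPu Hn) as [l [Hl _]].
    destruct L; [destruct Hl| discriminate].
  - destruct (classic (exists u, R v u /\ P u /\ ~ R u v)) as [[u [Hu [HPu Hnu]]]|Hn].
    + destruct (HC u Hu HPu Hnu) as [l [Hl [Hul Hlu]]].
      destruct (in_split _ _ Hl) as [L1 [L2 ->]].
      apply (IH (L1 ++ L2) w0 u).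
      * rewrite length_app in HL. simpl in HL. rewrite -plus_n_Sm in HL. rewrite length_app. exact HL.
      * eauto.
      * auto.
      * intros u' Hu' HPu' Hnu'.
        assert (Hvu' : R v u') by eauto.
        assert (Hnv : ~ R u' v) by (intro; apply Hnu'; eauto).
        destruct (HC u' Hvu' HPu' Hnv) as [l' [Hl' [H1 H2]]].
        apply in_app_or in Hl'. destruct Hl' as [Hl'|[<-|Hl']].
        -- exists l'; split; auto; apply in_or_app; auto.
        -- exfalso; apply Hnu'; eauto.
        -- exists l'; split; auto; apply in_or_app; auto.
    + exists v; split; auto; split; auto. intros u Hu HPu.
      apply NNPP; intro Hnu; apply Hn; exists u; auto.
Qed.

Lemma max_exists (L : list W) (w0 : W) : R w0 w0 ->
  (forall v, R w0 v -> exists l, In l L /\ R v l /\ R l v) -> P w0 ->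
  exists m, R w0 m /\ P m /\ forall u, R m u -> P u -> R u m.
Proof.
  intros Hr HC HP. apply (@max_gen (length L) L w0 w0); auto; intros u Hu _ _; apply HC; auto.
Qed.
End Max.

Section FML.
Variable n : nat.
Implicit Types a b c d : form n.

Definition bigOr (l : list (form n)) : form n := fold_right Or Bot l.

Lemma forces_bigOr (M : kmodel n) (v : kW M) l c : In c l -> forces v c -> forces v (bigOr l).
Proof.
  induction l as [|x l IH]; [intros []|]. intros [<-|Hc] H; simpl; [left; auto| right; auto].
Qed.

Lemma pf_bigOr (y : form n -> Prop) l : prime_filter y -> y (bigOr l) -> exists c, In c l /\ y c.
Proof.
  intro Hy; induction l as [|x l IH]; simpl; intro H.
  - exfalso; eapply pf_bot; eauto.
  - destruct (pf_or Hy H) as [H1|H1].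
    + exists x; split; [left|]; auto.
    + destruct (IH H1) as [c [H2 H3]]; exists c; split; [right|]; auto.
Qed.

Variable M : kmodel n.

Lemma fml (w : kW M) (L : list (kW M)) :
  (forall v, kR w v -> exists l, In l L /\ kR v l /\ kR l v) ->
  forall y, prime_filter y -> Defs.incl (Th w) y -> exists v, kR w v /\ same y (Th v).
Proof.
  intros HC y Hy Hwy.
  destruct (@max_exists _ (@kR n M) (@kRtrans n M) (fun v => Defs.incl (Th v) y) L w (kRrefl w) HC Hwy)
    as [m [Hwm [Hmy Hmax]]].
  exists m; split; auto. intro psi; split; [|apply Hmy].
  intro Hpsi. apply NNPP; intro Hnm.
  assert (Hch : exists chis, (forall l, In l L -> kR m l -> ~ kR l m -> exists c, In c chis /\ forces l c)
     /\ (forall c, In c chis -> ~ y c)).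
  { clear HC. induction L as [|l L IH].
    - exists nil; split; [intros l []| intros c []].
    - destruct IH as [chis [H1 H2]].
      destruct (classic (kR m l /\ ~ kR l m)) as [[Hml Hlm]|Hn].
      + assert (Hnp : ~ Defs.incl (Th l) y).
        { intro H; apply Hlm; apply Hmax; auto. }
        apply not_all_ex_not in Hnp. destruct Hnp as [c Hc].
        apply imply_to_and in Hc. destruct Hc as [Hc1 Hc2].
        exists (c :: chis); split.
        * intros l' [<-|Hl'] H3 H4; [exists c; split; [left|]; auto|].
          destruct (H1 l' Hl' H3 H4) as [c' [? ?]]; exists c'; split; [right|]; auto.
        * intros c' [<-|Hc']; auto.
      + exists chis; split; auto.
        intros l' [<-|Hl'] H3 H4; [exfalso; apply Hn; auto| apply H1; auto]. }
  destruct Hch as [chis [H1 H2]].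
  assert (Hf : forces m (Imp psi (bigOr chis))).
  { simpl. intros v Hmv Hv.
    destruct (classic (kR v m)) as [Hvm|Hvm].
    - exfalso; apply Hnm; eapply forces_mon; eauto.
    - destruct (HC v (kRtrans Hwm Hmv)) as [l [Hl [Hvl Hlv]]].
      destruct (H1 l Hl (kRtrans Hmv Hvl)) as [c [Hc Hlc]].
      + intro Hlm; apply Hvm; eapply kRtrans; eauto.
      + eapply forces_bigOr; eauto. eapply forces_mon; eauto. }
  apply Hmy in Hf. pose proof (pf_mp Hy Hf Hpsi) as Hb.
  destruct (pf_bigOr Hy Hb) as [c [Hc Hyc]]. eapply H2; eauto.
Qed.

Lemma fml_fin (w : kW M) (L : list (kW M)) :
  (forall v, kR w v -> exists l, In l L /\ kR v l /\ kR l v) -> finite_upset (Th w).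
Proof.
  intros HC. exists (map (fun l => Th l) L). intros y Hy Hwy.
  destruct (fml HC Hy Hwy) as [v [Hwv Hs]].
  destruct (HC v Hwv) as [l [Hl [Hvl Hlv]]].
  exists (Th l); split; [apply in_map; auto|].
  intro a; rewrite Hs; split; apply forces_mon; auto.
Qed.

End FML.

Section U.
Variable n : nat.
Implicit Types a b c d : form n.
Implicit Types x y z : upoint n.

Lemma same_sym (p q : form n -> Prop) : same p q -> same q p.
Proof. intros H a; split; apply H. Qed.

Lemma cover_list (T : Type) (p : T -> form n -> Prop) (x : form n -> Prop) :
  finite_upset x -> (forall t, prime_filter (p t)) ->
  exists LT : list T, forall t, Defs.incl x (p t) -> exists t', In t' LT /\ same (p t) (p t').
Proof.
  intros [l Hl] Hp.
  destruct (@reps _ T l (fun (z : form n -> Prop) t => same (p t) z)) as [LT HLT].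
  exists LT; intros t Ht. destruct (Hl (p t) (Hp t) Ht) as [z [Hz Hs]].
  destruct (HLT z Hz (ex_intro _ t Hs)) as [t' [H1 H2]].
  exists t'; split; auto. intro a; rewrite Hs H2; tauto.
Qed.

Lemma ule_refl x : ule x x. Proof. intros a; auto. Qed.
Lemma ule_trans x y z : ule x y -> ule y z -> ule x z. Proof. intros H1 H2 a Ha; auto. Qed.
Lemma ucol_mon x y i : ule x y -> ucol x i -> ucol y i. Proof. intros H; apply H. Qed.

Definition Ucan : kmodel n := KM ule_refl ule_trans ucol_mon.

Lemma upf x : prime_filter (proj1_sig x). Proof. exact (proj1 (proj2_sig x)). Qed.
Lemma ufin x : finite_upset (proj1_sig x). Proof. exact (proj2 (proj2_sig x)). Qed.

Lemma ucover x : exists L : list (upoint n), forall y, ule x y -> exists l, In l L /\ ule y l /\ ule l y.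
Proof.
  destruct (@cover_list (upoint n) (@proj1_sig _ _) _ (ufin x) upf) as [L HL].
  exists L; intros y Hy. destruct (HL y Hy) as [l [H1 H2]]; exists l; split; auto.
  split; intros a Ha; apply H2; auto.
Qed.

Lemma upimp x a b : proj1_sig x (Imp a b) <-> forall y, ule x y -> proj1_sig y a -> proj1_sig y b.
Proof.
  split.
  - intros H y Hxy Hya. exact (pf_mp (upf y) (Hxy _ H) Hya).
  - intro H. apply NNPP; intro Hn.
    destruct (pf_ext (upf x) Hn) as [y [Hy [Hxy [Hya Hyb]]]].
    assert (Hf : finite_upset y).
    { destruct (ufin x) as [l Hl]. exists l. intros z Hz Hyz; apply Hl; auto.
      intros c Hc; apply Hyz, Hxy; auto. }
    apply Hyb. apply (H (exist _ y (conj Hy Hf))); auto.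
Qed.

Lemma ucan_truth a : forall x : upoint n, forces (M:=Ucan) x a <-> proj1_sig x a.
Proof.
  induction a; intro x; simpl.
  - unfold ucol; tauto.
  - split; [tauto| apply (pf_bot (upf x))].
  - rewrite IHa1 IHa2. split; [intros [? ?]; apply pf_and; auto; apply upf|].
    intro H; apply (pf_andE (upf x) H).
  - rewrite IHa1 IHa2. split.
    + intros [H|H]; eapply (pf_cl (upf x)); eauto; [apply ndImpI; apply ndOrI1| apply ndImpI; apply ndOrI2];
      apply ndAx; left; auto.
    + intro H; apply (pf_or (upf x) H).
  - rewrite upimp. split; intros H y Hy; [rewrite -IHa1 -IHa2| rewrite IHa1 IHa2]; auto.
Qed.

Definition ult' x y := ule x y /\ ~ ule y x.

Lemma SEP (b : iform n) : forall x, ~ proj1_sig x (emb b) -> (forall z, ult x z -> proj1_sig z (emb b)) -> separated x.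
Proof.
  induction b as [i| |b1 IH1 b2 IH2|b1 IH1 b2 IH2]; intros x Hn Hs; simpl in *.
  - exists i; split; auto.
  - exfalso; apply Hn; apply (pf_top (upf x)).
  - destruct (classic (proj1_sig x (emb b1))) as [H1|H1].
    + apply IH2.
      * intro H2; apply Hn; apply pf_and; auto; apply upf.
      * intros z Hz; apply (pf_andE (upf z) (Hs z Hz)).
    + apply IH1; auto. intros z Hz; apply (pf_andE (upf z) (Hs z Hz)).
  - rewrite upimp in Hn. apply not_all_ex_not in Hn. destruct Hn as [y Hy].
    apply imply_to_and in Hy; destruct Hy as [Hxy Hy].
    apply imply_to_and in Hy; destruct Hy as [Hy1 Hy2].
    assert (Hyx : ule y x).
    { apply NNPP; intro Hn. apply Hy2. apply (pf_mp (upf y) (Hs y (conj Hxy Hn)) Hy1). }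
    apply IH2.
    + intro H; apply Hy2; apply Hxy; auto.
    + intros z [Hz1 Hz2]. apply (pf_mp (upf z) (Hs z (conj Hz1 Hz2))). apply Hz1, Hyx; auto.
Qed.

Lemma sepx (c : form n) (d : iform n) x : proj1_sig x c -> ~ proj1_sig x (emb d) ->
  exists m, ule x m /\ separated m /\ proj1_sig m c /\ ~ proj1_sig m (emb d).
Proof.
  intros Hc Hd. destruct (ucover x) as [L HL].
  destruct (@max_exists _ ule ule_trans (fun z => proj1_sig z c /\ ~ proj1_sig z (emb d)) L x (@ule_refl x) HL (conj Hc Hd))
    as [m [Hxm [[Hmc Hmd] Hmax]]].
  exists m; split; auto; split; auto.
  apply (SEP Hmd). intros z [Hz1 Hz2]. apply NNPP; intro Hn. apply Hz2. apply Hmax; auto.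
Qed.

Definition sle (s t : spoint n) := ule (proj1_sig s) (proj1_sig t).
Definition scol (s : spoint n) i := ucol (proj1_sig s) i.
Lemma sle_refl s : sle s s. Proof. apply ule_refl. Qed.
Lemma sle_trans s t u : sle s t -> sle t u -> sle s u. Proof. apply ule_trans. Qed.
Lemma scol_mon s t i : sle s t -> scol s i -> scol t i. Proof. apply ucol_mon. Qed.
Definition Us : kmodel n := KM sle_refl sle_trans scol_mon.

Lemma scover (s : spoint n) : exists L : list (spoint n), forall t, sle s t -> exists l, In l L /\ sle t l /\ sle l t.
Proof.
  destruct (@cover_list (spoint n) (fun t => proj1_sig (proj1_sig t)) _ (ufin (proj1_sig s)) (fun t => upf (proj1_sig t))) as [L HL].
  exists L; intros y Hy. destruct (HL y Hy) as [l [H1 H2]]; exists l; split; auto.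
  split; intros a Ha; apply H2; auto.
Qed.

Lemma Us_fin (s : spoint n) : finite_upset (Th (M:=Us) s).
Proof. destruct (scover s) as [L HL]. exact (@fml_fin n Us s L HL). Qed.

Definition fU (s : spoint n) : upoint n := exist _ (Th (M:=Us) s) (conj (@Th_pf n Us s) (Us_fin s)).

Lemma fU_pm : pmorphism fU.
Proof.
  split.
  - intros s t H; apply Th_mon; auto.
  - intros s i; simpl; unfold ucol; simpl; unfold Th; simpl; tauto.
  - intros s y Hy. destruct (scover s) as [L HL].
    destruct (@fml n Us s L HL _ (upf y) Hy) as [v [Hv Hs]].
    exists v; split; auto. apply same_sym; auto.
Qed.

Lemma pm_uniq f : pmorphism f -> forall a s, proj1_sig (f s) a <-> forces (M:=Us) s a.
Proof.
  intros [Hmon Hcol Hback] a. induction a; intro s; simpl.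
  - apply Hcol.
  - split; [apply (pf_bot (upf (f s)))| tauto].
  - rewrite -IHa1 -IHa2. split; [apply (pf_andE (upf _))| intros [? ?]; apply pf_and; auto; apply upf].
  - rewrite -IHa1 -IHa2. split.
    + intro H; apply (pf_or (upf _) H).
    + intros [H|H]; eapply (pf_cl (upf _)); eauto; [apply ndImpI; apply ndOrI1| apply ndImpI; apply ndOrI2];
      apply ndAx; left; auto.
  - rewrite upimp. split.
    + intros H t Hst Ht. rewrite -IHa2. apply H; [apply Hmon; auto| rewrite IHa1; auto].
    + intros H y Hy Hya. destruct (Hback s y Hy) as [t [Hst Heq]].
      apply Heq. rewrite IHa2. apply H; auto. rewrite -IHa1. apply Heq; auto.
Qed.

Lemma Uai_char y : Uai y <-> exists s, ueq (fU s) y.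
Proof.
  split.
  - intros [f [Hf [s Hs]]]. exists s. intro a. rewrite -Hs. simpl. unfold Th. rewrite (pm_uniq Hf). tauto.
  - intros [s Hs]. exists fU; split; [apply fU_pm| exists s; auto].
Qed.

Lemma Uai_fU s : Uai (fU s).
Proof. apply Uai_char; exists s; intro a; tauto. Qed.

Lemma L1 (a : iform n) : forall s : spoint n, forces (M:=Us) s (emb a) <-> proj1_sig (proj1_sig s) (emb a).
Proof.
  induction a as [i| |b1 IH1 b2 IH2|b1 IH1 b2 IH2]; intro s; simpl.
  - unfold scol, ucol; tauto.
  - split; [intros _; apply (pf_top (upf _))| intros _ v _ H; exact H].
  - rewrite IH1 IH2. split; [intros [? ?]; apply pf_and; auto; apply upf| apply (pf_andE (upf _))].
  - split.
    + intro H. apply NNPP; intro Hn.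
      rewrite upimp in Hn. apply not_all_ex_not in Hn. destruct Hn as [y Hy].
      apply imply_to_and in Hy; destruct Hy as [Hxy Hy].
      apply imply_to_and in Hy; destruct Hy as [Hy1 Hy2].
      destruct (sepx Hy1 Hy2) as [m [Hym [Hms [Hm1 Hm2]]]].
      apply Hm2. apply (IH2 (exist _ m Hms)). apply H.
      * simpl. unfold sle; simpl. eapply ule_trans; eauto.
      * apply IH1; auto.
    + intros H t Hst Ht. apply IH2. apply IH1 in Ht. apply (pf_mp (upf _) (Hst _ H) Ht).
Qed.

Lemma fU_IF (a : iform n) s : proj1_sig (fU s) (emb a) <-> proj1_sig (proj1_sig s) (emb a).
Proof. apply L1. Qed.

End U.

Section V.
Variable n : nat.
Implicit Types x y z : upoint n.

Definition IFsub (p q : form n -> Prop) := forall a : iform n, p (emb a) -> q (emb a).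
Definition IFeq (p q : form n -> Prop) := forall a : iform n, p (emb a) <-> q (emb a).

Definition bigIAnd (l : list (iform n)) : iform n := fold_right IAnd ITop l.

Lemma pf_bigIAnd (p : form n -> Prop) l : prime_filter p -> (p (emb (bigIAnd l)) <-> forall b, In b l -> p (emb b)).
Proof.
  intro Hp; induction l as [|c l IH]; simpl.
  - split; [intros _ b []| intros _; apply (pf_top Hp)].
  - split.
    + intro H; destruct (pf_andE Hp H) as [H1 H2]. intros b [<-|Hb]; auto. apply IH; auto.
    + intro H; apply (pf_and Hp); [apply H; left; auto| apply IH; intros; apply H; right; auto].
Qed.

Lemma F1 t q (b : iform n) : ~ proj1_sig t (Var q) -> (forall y, ult t y -> proj1_sig y (Var q)) ->
  ~ proj1_sig t (emb b) -> proj1_sig t (emb (IImp b (IVar q))).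
Proof.
  intros Hq Hs Hb. simpl. apply upimp. intros y Hty Hy.
  apply Hs; split; [auto| intro Hyt; apply Hb; apply Hyt; auto].
Qed.

Lemma L2 t u0 : separated t -> IFsub (proj1_sig u0) (proj1_sig t) ->
  exists u, ule u0 u /\ separated u /\ IFeq (proj1_sig u) (proj1_sig t).
Proof.
  intros [q [Hq Hqs]] H0. destruct (ucover u0) as [L HL].
  destruct (@max_exists _ ule (@ule_trans n) (fun z => IFsub (proj1_sig z) (proj1_sig t)) L u0 (@ule_refl n u0) HL H0)
    as [m [Hum [Hmt Hmax]]].
  assert (C : forall a : iform n, proj1_sig t (emb a) -> proj1_sig m (emb a)).
  { intros a Ha. apply NNPP; intro Hna.
    destruct (ucover m) as [Lm HLm].
    assert (Hbs : exists bs : list (iform n), (forall z, ult m z -> exists b, In b bs /\ proj1_sig z (emb b))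
       /\ (forall b, In b bs -> ~ proj1_sig t (emb b))).
    { assert (G : exists bs : list (iform n), (forall l, In l Lm -> ult m l -> exists b, In b bs /\ proj1_sig l (emb b))
       /\ (forall b, In b bs -> ~ proj1_sig t (emb b))).
      { clear HLm. induction Lm as [|l Lm IH].
        - exists nil; split; [intros l []| intros b []].
        - destruct IH as [bs [H1 H2]].
          destruct (classic (ult m l)) as [Hml|Hn].
          + assert (Hnp : ~ IFsub (proj1_sig l) (proj1_sig t)).
            { intro H; apply (proj2 Hml); apply Hmax; auto. apply (proj1 Hml). }
            apply not_all_ex_not in Hnp. destruct Hnp as [c Hc].
            apply imply_to_and in Hc. destruct Hc as [Hc1 Hc2].
            exists (c :: bs); split.
            * intros l' [<-|Hl'] H3; [exists c; split; [left|]; auto|].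
              destruct (H1 l' Hl' H3) as [c' [? ?]]; exists c'; split; [right|]; auto.
            * intros c' [<-|Hc']; auto.
          + exists bs; split; auto.
            intros l' [<-|Hl'] H3; [exfalso; apply Hn; auto| apply H1; auto]. }
      destruct G as [bs [G1 G2]]. exists bs; split; auto.
      intros z [Hz1 Hz2]. destruct (HLm z Hz1) as [l [Hl [Hzl Hlz]]].
      destruct (G1 l Hl) as [b [Hb Hlb]].
      - split; [eapply ule_trans; eauto| intro Hlm; apply Hz2; eapply ule_trans; eauto].
      - exists b; split; auto. }
    destruct Hbs as [bs [B1 B2]].
    set (gam := IImp (IAnd a (bigIAnd (map (fun b => IImp b (IVar q)) bs))) (IVar q)).
    assert (Hg : proj1_sig m (emb gam)).
    { simpl. apply upimp. intros y Hmy Hy.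
      destruct (pf_andE (upf y) Hy) as [Hya Hyb].
      destruct (classic (ule y m)) as [Hym|Hym]; [exfalso; apply Hna; apply Hym; auto|].
      destruct (B1 y (conj Hmy Hym)) as [b [Hb Hyb']].
      pose proof (proj1 (@pf_bigIAnd _ _ (upf y)) Hyb (IImp b (IVar q))) as Hbq. simpl in Hbq.
      exact (pf_mp (upf y) (Hbq (in_map _ _ _ Hb)) Hyb'). }
    apply Hmt in Hg. apply Hq. apply (pf_mp (upf t) Hg). apply pf_and; [apply upf| auto|].
    apply (@pf_bigIAnd _ _ (upf t)). intros c Hc. apply in_map_iff in Hc. destruct Hc as [b [<- Hb]].
    apply F1; auto. }
  exists m; split; auto; split.
  - exists q; split.
    + intro H; apply Hq; apply (Hmt (IVar q)); auto.
    + intros z [Hz1 Hz2].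
      assert (Hnp : ~ IFsub (proj1_sig z) (proj1_sig t)).
      { intro H; apply Hz2; apply Hmax; auto. }
      apply not_all_ex_not in Hnp. destruct Hnp as [c Hc].
      apply imply_to_and in Hc. destruct Hc as [Hc1 Hc2].
      pose proof (F1 Hq Hqs Hc2) as Hf. apply C in Hf. apply Hz1 in Hf.
      exact (pf_mp (upf z) Hf Hc1).
  - intro a; split; [apply Hmt| apply C].
Qed.

Lemma bisim phi : forall s t : spoint n, IFeq (proj1_sig (proj1_sig s)) (proj1_sig (proj1_sig t)) ->
  (forces (M:=Us n) s phi <-> forces (M:=Us n) t phi).
Proof.
  induction phi as [i| |a IHa b IHb|a IHa b IHb|a IHa b IHb]; intros s t Hst; simpl.
  - exact (Hst (IVar i)).
  - tauto.
  - rewrite (IHa s t Hst) (IHb s t Hst); tauto.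
  - rewrite (IHa s t Hst) (IHb s t Hst); tauto.
  - assert (D : forall s t : spoint n, IFeq (proj1_sig (proj1_sig s)) (proj1_sig (proj1_sig t)) ->
       forces (M:=Us n) s (Imp a b) -> forces (M:=Us n) t (Imp a b)).
    { clear s t Hst. intros s t Hst H t' Htt' Ha.
      destruct (@L2 (proj1_sig t') (proj1_sig s) (proj2_sig t')) as [u [Hsu [Hu Heq]]].
      - intros c Hc. apply Htt'. apply Hst; auto.
      - set (u' := exist _ u Hu : spoint n).
        assert (E : IFeq (proj1_sig (proj1_sig u')) (proj1_sig (proj1_sig t'))) by exact Heq.
        apply (IHb u' t' E). apply H; [exact Hsu|]. apply (IHa u' t' E); auto. }
    split; apply D; auto. intro c; rewrite Hst; tauto.
Qed.

Lemma Kord (s t : spoint n) : IFsub (proj1_sig (proj1_sig s)) (proj1_sig (proj1_sig t)) -> ule (fU s) (fU t).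
Proof.
  intro H. destruct (@L2 (proj1_sig t) (proj1_sig s) (proj2_sig t) H) as [u [Hsu [Hu Heq]]].
  set (u' := exist _ u Hu : spoint n).
  intros a Ha. simpl in Ha |- *. unfold Th in *.
  apply (bisim a (s := u') (t := t) Heq). eapply forces_mon; [|exact Ha]. exact Hsu.
Qed.

Lemma ueq_ule x y : ueq x y -> ule x y. Proof. intros H a; apply H. Qed.
Lemma ueq_ule' x y : ueq x y -> ule y x. Proof. intros H a; apply H. Qed.

Lemma Uai_ord x y : Uai x -> Uai y -> IFsub (proj1_sig x) (proj1_sig y) -> ule x y.
Proof.
  rewrite !Uai_char. intros [s Hs] [t Ht] H.
  apply ule_trans with (fU s); [apply ueq_ule'; auto|].
  apply ule_trans with (fU t); [|apply ueq_ule; auto].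
  apply Kord. intros a Ha. apply fU_IF. apply Ht. apply H. apply Hs. apply fU_IF. auto.
Qed.

Lemma Uai_sep x : Uai x -> exists q : 'I_n, ~ proj1_sig x (Var q) /\ forall y, Uai y -> ult x y -> proj1_sig y (Var q).
Proof.
  intro Hx. pose proof Hx as Hx'. rewrite Uai_char in Hx. destruct Hx as [s Hs].
  destruct (proj2_sig s) as [q [Hq Hqs]]. exists q; split.
  - intro H. apply Hs in H. apply Hq. apply (fU_IF (IVar q) s). auto.
  - intros y Hy [Hxy Hyx]. pose proof Hy as Hy'. rewrite Uai_char in Hy. destruct Hy as [t Ht].
    assert (Hsub : IFsub (proj1_sig (proj1_sig s)) (proj1_sig (proj1_sig t))).
    { intros a Ha. apply fU_IF. apply Ht. apply Hxy. apply Hs. apply fU_IF; auto. }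
    destruct (@L2 (proj1_sig t) (proj1_sig s) (proj2_sig t) Hsub) as [u [Hsu [Hu Heq]]].
    destruct (classic (ule u (proj1_sig s))) as [Hus|Hus].
    + exfalso; apply Hyx. apply Uai_ord; auto.
      intros a Ha. apply Hs. apply fU_IF. apply Hus. apply Heq. apply fU_IF. apply Ht; auto.
    + apply Ht. apply (fU_IF (IVar q) t). apply (Heq (IVar q)). apply Hqs. split; auto.
Qed.

Lemma Uai_imp x a b : Uai x -> (proj1_sig x (Imp a b) <-> forall y, Uai y -> ule x y -> proj1_sig y a -> proj1_sig y b).
Proof.
  intro Hx. split.
  - intros H y _ Hxy Hya. exact (pf_mp (upf y) (Hxy _ H) Hya).
  - intro H. rewrite Uai_char in Hx. destruct Hx as [s Hs].
    apply Hs. apply NNPP; intro Hn. simpl in Hn. unfold Th in Hn. simpl in Hn.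
    apply not_all_ex_not in Hn. destruct Hn as [t Hn].
    apply imply_to_and in Hn; destruct Hn as [Hst Hn].
    apply imply_to_and in Hn; destruct Hn as [Hta Htb].
    apply Htb. apply (H (fU t) (Uai_fU t)); auto.
    apply ule_trans with (fU s); [apply ueq_ule'; auto| apply (Th_mon (M:=Us n)); auto].
Qed.

End V.

Lemma memIn (T : eqType) (x : T) (s : list T) : x \in s -> In x s.
Proof.
  induction s as [|y s IH]; [by []|]. rewrite seq.in_cons => /orP [/eqP ->|H]; [left; auto| right; auto].
Qed.

Lemma count_strict (T : Type) (p p' : T -> bool) (s : list T) : (forall i, p' i -> p i) ->
  (exists i, In i s /\ p i /\ ~~ p' i) -> count p' s < count p s.
Proof.
  intro Hpp. induction s as [|x s IH]; [intros [i [[] _]]|].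
  intros [i [[<-|Hi] [H1 H2]]]; simpl.
  - rewrite H1 (negbTE H2) add0n add1n ltnS.
    apply sub_count; intros y Hy; apply Hpp; auto.
  - have Hlt := IH (ex_intro _ i (conj Hi (conj H1 H2))).
    case E: (p' x); [rewrite (Hpp _ E)|]; case: (p x); simpl; rewrite ?add1n ?add0n ?ltnS;
      auto; apply ltnW; auto.
Qed.

Fixpoint allbl (m : nat) : list (list bool) :=
  match m with 0 => nil :: nil | m'.+1 => flat_map (fun l => (true :: l) :: (false :: l) :: nil) (allbl m') end.

Lemma allbl_in (l : list bool) : In l (allbl (size l)).
Proof.
  induction l as [|b l IH]; simpl; [left; auto|].
  apply in_flat_map. exists l; split; auto. destruct b; [left|right;left]; auto.
Qed.

Fixpoint subs (A : Type) (l : list A) : list (list A) :=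
  match l with nil => nil :: nil | a :: l' => map (cons a) (subs l') ++ subs l' end.

Lemma subs_ex (A : Type) (l : list A) (P : A -> Prop) :
  exists S, In S (subs l) /\ forall a, In a S <-> (In a l /\ P a).
Proof.
  induction l as [|x l [S [HS HP]]]; simpl.
  - exists nil; split; [left; auto| intro a; split; [intros []| intros [[] _]]].
  - destruct (classic (P x)) as [Hx|Hx].
    + exists (x :: S); split; [apply in_or_app; left; apply in_map; auto|].
      intro a; split.
      * intros [<-|Ha]; [split; auto; left; auto|]. apply HP in Ha; destruct Ha; split; auto; right; auto.
      * intros [[<-|Ha] Hpa]; [left; auto| right; apply HP; auto].
    + exists S; split; [apply in_or_app; right; auto|].
      intro a; split.
      * intro Ha; apply HP in Ha; destruct Ha; split; auto; right; auto.
      * intros [[<-|Ha] Hpa]; [contradiction| apply HP; auto].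
Qed.

Section W.
Variable n : nat.
Implicit Types x y z : upoint n.

Definition cb x (i : 'I_n) : bool := if excluded_middle_informative (ucol x i) then true else false.
Lemma cbP x i : cb x i = true <-> ucol x i.
Proof. unfold cb; destruct excluded_middle_informative; split; auto; discriminate. Qed.

Definition key x : list bool := seq.map (cb x) (enum 'I_n).
Definition cnt x : nat := count (fun i => ~~ cb x i) (enum 'I_n).

Lemma cnt_key x : cnt x = count negb (key x).
Proof. unfold cnt, key. rewrite count_map. reflexivity. Qed.

Lemma in_enum (i : 'I_n) : In i (enum 'I_n).
Proof. apply memIn. by rewrite mem_enum. Qed.

Lemma key_col x x' : key x = key x' -> forall i, ucol x i <-> ucol x' i.
Proof.
  intros H i. rewrite -!cbP. unfold key in H.
  assert (Hi := in_enum i). revert H Hi. generalize (enum 'I_n). intro s.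
  induction s as [|j s IH]; simpl; [intros _ []|].
  intros H [->|Hi]; injection H; intros; [rewrite H1|]; auto; tauto.
Qed.

Lemma ult_ueq x y y' : ult x y -> ueq y y' -> ult x y'.
Proof. intros [H1 H2] H; split; [intros a Ha; apply H; auto| intro H3; apply H2; intros a Ha; apply H3, H; auto]. Qed.

Lemma Uai_cnt x y : Uai x -> Uai y -> ult x y -> cnt y < cnt x.
Proof.
  intros Hx Hy Hxy. destruct (Uai_sep Hx) as [q [Hq Hqs]].
  apply count_strict.
  - intros i H1; apply/negP; intro H2; move/negP: H1; apply. apply cbP; apply cbP in H2.
    apply (proj1 Hxy); auto.
  - exists q; split; [apply in_enum|]. split.
    + apply/negP; intro H; apply Hq; apply cbP; auto.
    + rewrite negbK; apply cbP; apply Hqs; auto.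
Qed.

Lemma Det x x' : Uai x -> Uai x' -> (forall i, ucol x i <-> ucol x' i) ->
  (forall y, Uai y -> (ult x y <-> ult x' y)) -> ueq x x'.
Proof.
  intros Hx Hx' Hc Hs.
  assert (E : forall a : iform n, proj1_sig x (emb a) <-> proj1_sig x' (emb a)).
  { induction a as [i| |b IHb c IHc|b IHb c IHc]; simpl.
    - apply Hc.
    - split; intros; apply pf_top; apply upf.
    - split; intro H; [destruct (pf_andE (upf x) H)| destruct (pf_andE (upf x') H)];
        apply pf_and; try apply upf; tauto.
    - rewrite (Uai_imp _ _ Hx) (Uai_imp _ _ Hx').
      assert (D : forall u u', Uai u -> Uai u' ->
          (proj1_sig u (emb b) <-> proj1_sig u' (emb b)) -> (proj1_sig u (emb c) <-> proj1_sig u' (emb c)) ->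
          (forall y, Uai y -> (ult u y <-> ult u' y)) ->
          (forall y, Uai y -> ule u y -> proj1_sig y (emb b) -> proj1_sig y (emb c)) ->
          (forall y, Uai y -> ule u' y -> proj1_sig y (emb b) -> proj1_sig y (emb c))).
      { intros u u' Hu Hu' Eb Ec Hs' H y Hy Hu'y Hyb.
        destruct (classic (ule y u')) as [Hyu|Hyu].
        - apply Hu'y. apply Ec. apply H; auto. apply ule_refl. apply Eb. apply Hyu; auto.
        - apply H; auto. apply (proj1 (proj2 (Hs' y Hy) (conj Hu'y Hyu))). }
      split; apply D; auto; try tauto. intros y Hy; rewrite (Hs y Hy); tauto. }
  intro a; split; intro Ha.
  - apply (Uai_ord Hx Hx'); auto. intros b Hb; apply E; auto.
  - apply (Uai_ord Hx' Hx); auto. intros b Hb; apply E; auto.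
Qed.

Lemma fin_k k : exists L : list (upoint n), (forall l, In l L -> Uai l) /\
  forall x, Uai x -> cnt x < k -> exists l, In l L /\ ueq x l.
Proof.
  induction k as [|k [Lk [HLk1 HLk2]]].
  - exists nil; split; [intros l []| intros x _ H; discriminate].
  - set (I := flat_map (fun kk => map (fun S => (kk, S)) (subs Lk)) (allbl (size (enum 'I_n)))).
    destruct (@reps _ (upoint n) I (fun p t => Uai t /\ key t = p.1 /\ forall l, In l p.2 <-> (In l Lk /\ ult t l)))
      as [L HL].
    exists (filter (fun t => if excluded_middle_informative (Uai t) then true else false) L); split.
    + intros l Hl. apply filter_In in Hl. destruct Hl as [_ Hl].
      destruct excluded_middle_informative; [auto|discriminate].
    + intros x Hx Hcx.
      destruct (subs_ex Lk (fun l => ult x l)) as [S [HS HSP]].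
      destruct (HL (key x, S)) as [t [Ht [Htu [Htk Hts]]]].
      * apply in_flat_map. exists (key x); split.
        -- unfold key. rewrite -(size_map (cb x)). apply allbl_in.
        -- apply in_map; auto.
      * exists x; split; auto.
      * exists t; split.
        -- apply filter_In; split; auto. destruct excluded_middle_informative; [auto|contradiction].
        -- simpl in Htk, Hts. apply Det; auto.
           ++ intro i; rewrite (key_col Htk); tauto.
           ++ assert (Hct : cnt t = cnt x) by (rewrite !cnt_key Htk; auto).
              intros y Hy; split; intro Hu.
              ** assert (Hcy : cnt y < k) by (apply leq_trans with (cnt x); [apply Uai_cnt|]; auto).
                 destruct (HLk2 y Hy Hcy) as [l [Hl Hyl]].
                 assert (Hl2 : In l S) by (apply HSP; split; auto; eapply ult_ueq; eauto).
                 apply Hts in Hl2. destruct Hl2 as [_ Hl2]. eapply ult_ueq; eauto.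
                 intro a; split; apply Hyl.
              ** assert (Hcy : cnt y < k) by (apply leq_trans with (cnt t); [apply Uai_cnt|rewrite Hct]; auto).
                 destruct (HLk2 y Hy Hcy) as [l [Hl Hyl]].
                 assert (Hl2 : In l S) by (apply Hts; split; auto; eapply ult_ueq; eauto).
                 apply HSP in Hl2. destruct Hl2 as [_ Hl2]. eapply ult_ueq; eauto.
                 intro a; split; apply Hyl.
Qed.

Lemma Uai_fin : exists L : list (upoint n), (forall l, In l L -> Uai l) /\
  forall x, Uai x -> exists l, In l L /\ ueq x l.
Proof.
  destruct (fin_k (size (enum 'I_n)).+1) as [L [H1 H2]]. exists L; split; auto.
  intros x Hx; apply H2; auto. rewrite ltnS. apply count_size.
Qed.

End W.

Section F.
Variable n : nat.

Fixpoint sub (a : form n) : list (form n) :=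
  a :: match a with And b c | Or b c | Imp b c => sub b ++ sub c | _ => nil end.

Lemma sub_self a : In a (sub a).
Proof. destruct a; left; auto. Qed.

Lemma sub_trans a : forall p, In p (sub a) -> List.incl (sub p) (sub a).
Proof.
  induction a; intros p [<-|Hp]; try (intros q Hq; exact Hq); simpl in Hp; try contradiction;
  apply in_app_or in Hp; destruct Hp as [Hp|Hp];
  [apply IHa1 in Hp| apply IHa2 in Hp| apply IHa1 in Hp| apply IHa2 in Hp| apply IHa1 in Hp| apply IHa2 in Hp];
  intros q Hq; right; apply in_or_app; auto.
Qed.

Variable Sig : list (form n).
Hypothesis Hsig : forall p, In p Sig -> List.incl (sub p) Sig.

Definition PF := {x : form n -> Prop | prime_filter x}.
Definition fR (x y : PF) := forall p, In p Sig -> proj1_sig x p -> proj1_sig y p.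
Definition fV (x : PF) (i : 'I_n) := In (Var i) Sig /\ proj1_sig x (Var i).
Lemma fR_refl x : fR x x. Proof. intros p _ H; exact H. Qed.
Lemma fR_trans x y z : fR x y -> fR y z -> fR x z. Proof. intros H1 H2 p Hp H; auto. Qed.
Lemma fV_mon x y i : fR x y -> fV x i -> fV y i. Proof. intros H [H1 H2]; split; auto. Qed.
Definition MF : kmodel n := KM fR_refl fR_trans fV_mon.

Lemma MF_truth p : In p Sig -> forall x : PF, forces (M:=MF) x p <-> proj1_sig x p.
Proof.
  induction p as [i| |a IHa b IHb|a IHa b IHb|a IHa b IHb]; intros Hin x; simpl.
  - unfold fV; tauto.
  - split; [tauto| apply (pf_bot (proj2_sig x))].
  - assert (Ha : In a Sig) by (apply (@Hsig _ Hin); simpl; right; apply in_or_app; left; apply sub_self).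
    assert (Hb : In b Sig) by (apply (@Hsig _ Hin); simpl; right; apply in_or_app; right; apply sub_self).
    rewrite (IHa Ha) (IHb Hb). split; [intros [? ?]; apply pf_and; auto; apply (proj2_sig x)| apply (pf_andE (proj2_sig x))].
  - assert (Ha : In a Sig) by (apply (@Hsig _ Hin); simpl; right; apply in_or_app; left; apply sub_self).
    assert (Hb : In b Sig) by (apply (@Hsig _ Hin); simpl; right; apply in_or_app; right; apply sub_self).
    rewrite (IHa Ha) (IHb Hb). split.
    + intros [H|H]; eapply (pf_cl (proj2_sig x)); eauto; [apply ndImpI; apply ndOrI1| apply ndImpI; apply ndOrI2];
      apply ndAx; left; auto.
    + intro H; apply (pf_or (proj2_sig x) H).
  - assert (Ha : In a Sig) by (apply (@Hsig _ Hin); simpl; right; apply in_or_app; left; apply sub_self).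
    assert (Hb : In b Sig) by (apply (@Hsig _ Hin); simpl; right; apply in_or_app; right; apply sub_self).
    split.
    + intro H. apply NNPP; intro Hn.
      destruct (pf_ext (proj2_sig x) Hn) as [y [Hy [Hxy [Hya Hyb]]]].
      apply Hyb. apply (IHb Hb (exist _ y Hy)). apply H.
      * intros q _ Hq; apply Hxy; auto.
      * apply (IHa Ha (exist _ y Hy)); auto.
    + intros H y Hxy Hya. apply (IHb Hb). apply (IHa Ha) in Hya.
      exact (pf_mp (proj2_sig y) (Hxy _ Hin H) Hya).
Qed.

Definition cbf (x : PF) (p : form n) : bool := if excluded_middle_informative (proj1_sig x p) then true else false.
Definition prof (x : PF) : list bool := seq.map (cbf x) Sig.

Lemma prof_eq x y : prof x = prof y -> forall p, In p Sig -> (proj1_sig x p <-> proj1_sig y p).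
Proof.
  unfold prof. generalize Sig. intro s. induction s as [|q s IH]; [intros _ _ []|].
  simpl. intros H p [->|Hp]; injection H; intros H1 H2.
  - unfold cbf in H2. do 2 destruct excluded_middle_informative; simpl in H2; try discriminate; tauto.
  - apply IH; auto.
Qed.

Lemma MF_cover : exists L : list PF, forall v : PF, exists l, In l L /\ fR v l /\ fR l v.
Proof.
  destruct (@reps _ PF (allbl (size Sig)) (fun pr t => prof t = pr)) as [L HL].
  exists L; intro v.
  destruct (HL (prof v)) as [t [Ht Htv]].
  - unfold prof. rewrite -(size_map (cbf v)). apply allbl_in.
  - exists v; auto.
  - exists t; split; auto. split; intros p Hp H; apply (prof_eq Htv Hp); auto.
Qed.

Lemma MF_fin (x : PF) : finite_upset (Th (M:=MF) x).
Proof.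
  destruct MF_cover as [L HL]. apply (@fml_fin n MF x L). intros v _; apply HL.
Qed.

End F.

Lemma countermodel n (a b : iform n) : ~ prov (Imp (emb a) (emb b)) ->
  exists u : upoint n, proj1_sig u (emb a) /\ ~ proj1_sig u (emb b).
Proof.
  intro Hn.
  destruct (@lindenbaum n (fun p => p = emb a) (emb b)) as [Y [HY [HS Hb]]].
  - intros [L [HL Hd]]. apply Hn. apply ndImpI. eapply nd_weak; [exact Hd|].
    intros q Hq; left; symmetry; apply HL; auto.
  - set (Sig := sub (Imp (emb a) (emb b))).
    assert (Hsig : forall p, In p Sig -> List.incl (sub p) Sig) by apply sub_trans.
    set (x0 := exist _ Y HY : PF n).
    exists (exist _ (Th (M:=@MF n Sig) x0) (conj (@Th_pf n (@MF n Sig) x0) (@MF_fin n Sig x0))).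
    simpl. unfold Th.
    assert (Ha : In (emb a) Sig) by (right; apply in_or_app; left; apply sub_self).
    assert (Hb' : In (emb b) Sig) by (right; apply in_or_app; right; apply sub_self).
    rewrite (@MF_truth n Sig Hsig _ Ha x0) (@MF_truth n Sig Hsig _ Hb' x0). simpl. split; auto.
Qed.

Section Main.
Variable n : nat.
Implicit Types x y z : upoint n.

Definition gg (a : iform n) (x : upoint n) : Prop := Uai x /\ proj1_sig x (emb a).



Lemma sepform x y : Uai x -> Uai y -> ~ ule x y -> exists c : iform n, proj1_sig x (emb c) /\ ~ proj1_sig y (emb c).
Proof.
  intros Hx Hy Hn. apply NNPP; intro H. apply Hn. apply Uai_ord; auto.
  intros c Hc. apply NNPP; intro Hc'. apply H; exists c; auto.
Qed.

Lemma upform (LU : list (upoint n)) : (forall l, In l LU -> Uai l) -> (forall x, Uai x -> exists l, In l LU /\ ueq x l) ->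
  forall x, Uai x -> exists phi : iform n, forall z, Uai z -> (proj1_sig z (emb phi) <-> ule x z).
Proof.
  intros H1 H2 x Hx.
  assert (G : exists cs : list (iform n), (forall l, In l LU -> ~ ule x l -> exists c, In c cs /\ ~ proj1_sig l (emb c))
     /\ (forall c, In c cs -> proj1_sig x (emb c))).
  { clear H2. induction LU as [|l LU IH].
    - exists nil; split; [intros l []| intros c []].
    - destruct IH as [cs [G1 G2]]; [intros; apply H1; right; auto|].
      destruct (classic (ule x l)) as [Hxl|Hxl].
      + exists cs; split; auto. intros l' [<-|Hl'] Hn; [contradiction| auto].
      + destruct (sepform Hx (H1 l (or_introl erefl)) Hxl) as [c [Hc1 Hc2]].
        exists (c :: cs); split.
        * intros l' [<-|Hl'] Hn; [exists c; split; [left|]; auto|].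
          destruct (G1 l' Hl' Hn) as [c' [? ?]]; exists c'; split; [right|]; auto.
        * intros c' [<-|Hc']; auto. }
  destruct G as [cs [G1 G2]]. exists (bigIAnd cs). intros z Hz.
  rewrite (@pf_bigIAnd n _ _ (upf z)). split.
  - intro H. apply NNPP; intro Hn. destruct (H2 z Hz) as [l [Hl Hzl]].
    destruct (G1 l Hl) as [c [Hc Hlc]].
    + intro Hxl; apply Hn; intros a Ha; apply Hzl; apply Hxl; auto.
    + apply Hlc; apply Hzl; apply H; auto.
  - intros Hxz c Hc; apply Hxz; apply G2; auto.
Qed.

Lemma psiform (LU : list (upoint n)) : (forall l, In l LU -> Uai l) -> (forall x, Uai x -> exists l, In l LU /\ ueq x l) ->
  forall x, Uai x -> exists psi : iform n, forall z, Uai z -> (proj1_sig z (emb psi) <-> ~ ule z x).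
Proof.
  intros H1 H2 x Hx. destruct (upform H1 H2 Hx) as [phi Hphi].
  destruct (Uai_sep Hx) as [q [Hq Hqs]].
  exists (IImp phi (IVar q)). intros z Hz. simpl. rewrite (Uai_imp _ _ Hz). split.
  - intros H Hzx. apply Hq. apply H; auto. apply Hphi; auto. apply ule_refl.
  - intros Hzx w Hw Hzw Hwphi. apply Hphi in Hwphi; auto.
    apply Hqs; auto. split; auto. intro Hwx; apply Hzx; eapply ule_trans; eauto.
Qed.

Theorem main : exists g : iform n -> (upoint n -> Prop), impl_semilattice_iso g.
Proof.
  exists gg. split.
  - intro a; split; [intros x [H _]; auto|]. intros x y [Hx Ha] Hy Hxy; split; auto.
  - intros a b x; unfold gg; simpl. split.
    + intros [Hx H]; destruct (pf_andE (upf x) H); tauto.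
    + intros [[Hx Ha] [_ Hb]]; split; auto; apply pf_and; auto; apply upf.
  - intros a b x; unfold gg, up_imp; simpl. split.
    + intros [Hx H]; split; auto. intros y Hy Hxy [_ Hya]; split; auto.
      exact (proj1 (Uai_imp _ _ Hx) H y Hy Hxy Hya).
    + intros [Hx H]; split; auto. apply (Uai_imp _ _ Hx). intros y Hy Hxy Hya.
      apply (H y Hy Hxy (conj Hy Hya)).
  - intros a b; split.
    + intro H.
      assert (D : forall a b : iform n, (forall x, gg a x -> gg b x) -> prov (Imp (emb a) (emb b))).
      { clear a b H. intros a b H. apply NNPP; intro Hn.
        destruct (countermodel Hn) as [u [Hua Hub]].
        destruct (sepx Hua Hub) as [m [_ [Hms [Hma Hmb]]]].
        set (s := exist _ m Hms : spoint n).
        apply Hmb. apply (fU_IF b s). apply H. split; [apply Uai_fU| apply (fU_IF a s); auto]. }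
      split; apply D; intros x; apply H.
    + intros [H1 H2] x; unfold gg; split; intros [Hx H].
      * split; [exact Hx| apply (pf_cl (upf x) H H1)].
      * split; [exact Hx| apply (pf_cl (upf x) H H2)].
  - intros A [HA1 HA2].
    destruct (@Uai_fin n) as [LU [HLU1 HLU2]].
    assert (G : exists ds : list (iform n),
      (forall l, In l LU -> ~ A l -> exists psi, In psi ds /\ forall z, Uai z -> (proj1_sig z (emb psi) <-> ~ ule z l))
      /\ (forall psi, In psi ds -> exists l, Uai l /\ ~ A l /\ forall z, Uai z -> (proj1_sig z (emb psi) <-> ~ ule z l))).
    { clear HLU2. revert HLU1. intro HLU1'. induction LU as [|l LU IH].
      - exists nil; split; [intros l []| intros c []].
      - destruct IH as [ds [G1 G2]]; [intros; apply HLU1'; right; auto|].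
        destruct (classic (A l)) as [Hl|Hl].
        + exists ds; split; auto. intros l' [<-|Hl'] Hn; [contradiction| auto].
        + destruct (@Uai_fin n) as [LU' [H1 H2]].
          destruct (psiform H1 H2 (HLU1' l (or_introl erefl))) as [psi Hpsi].
          exists (psi :: ds); split.
          * intros l' [<-|Hl'] Hn; [exists psi; split; [left|]; auto|].
            destruct (G1 l' Hl' Hn) as [c' [? ?]]; exists c'; split; [right|]; auto.
          * intros c' [<-|Hc']; auto. exists l; split; [apply HLU1'; left; auto| split; auto]. }
    destruct G as [ds [G1 G2]].
    exists (bigIAnd ds). intro x; unfold gg. split.
    + intros [Hx H]. rewrite (@pf_bigIAnd n _ _ (upf x)) in H.
      apply NNPP; intro Hn. destruct (HLU2 x Hx) as [l [Hl Hxl]].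
      assert (Hnl : ~ A l).
      { intro Hal. apply Hn. apply (HA2 l x Hal Hx). intros a Ha; apply Hxl; auto. }
      destruct (G1 l Hl Hnl) as [psi [Hpsi Hz]].
      apply (proj1 (Hz x Hx) (H psi Hpsi)). intros a Ha; apply Hxl; auto.
    + intro Hx. assert (Hux := HA1 x Hx). split; auto.
      apply (@pf_bigIAnd n _ _ (upf x)). intros psi Hpsi.
      destruct (G2 psi Hpsi) as [l [Hl [Hnl Hz]]].
      apply (Hz x Hux). intro Hxl. apply Hnl. apply (HA2 x l Hx Hl Hxl).
Qed.

End Main.

Theorem corollary3p17 (n : nat) :
  exists g : iform n -> (upoint n -> Prop), impl_semilattice_iso g.
Proof. exact (main n). Qed.
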